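(* For $j=1,2,3,4$ let $\mathcal{S}_j\subset\partial H^2_\mathbb{C}$ be the spinal sphere of $\gamma_j$. Then, for $k\in\mathbb{Z}$: $\mathcal{S}_1\cap G_1^k\mathcal{S}_1\neq\emptyset$ only if $-2\le k\le2$; $\mathcal{S}_1\cap G_1^k\mathcal{S}_2\neq\emptyset$ only if $-4\le k\le1$; $\mathcal{S}_1\cap G_1^k\mathcal{S}_3\neq\emptyset$ only if $-3\le k\le1$; $\mathcal{S}_1\cap G_1^k\mathcal{S}_4\neq\emptyset$ only if $-4\le k\le0$; $\mathcal{S}_2\cap G_1^k\mathcal{S}_2\neq\emptyset$ only if $-2\le k\le2$; $\mathcal{S}_2\cap G_1^k\mathcal{S}_3\neq\emptyset$ only if $-2\le k\le2$; $\mathcal{S}_2\cap G_1^k\mathcal{S}_4\neq\emptyset$ only if $-2\le k\le2$; $\mathcal{S}_3\cap G_1^k\mathcal{S}_3\neq\emptyset$ only if $-2\le k\le2$; $\mathcal{S}_3\cap G_1^k\mathcal{S}_4\neq\emptyset$ only if $-2\le k\le1$; $\mathcal{S}_4\cap G_1^k\mathcal{S}_4\neq\emptyset$ only if $-2\le k\le2$.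
   Context: Hermitian form on $\mathbb{C}^3$: $\langle V,W\rangle=V_1\overline{W_3}+V_2\overline{W_2}+V_3\overline{W_1}$; $\partial H^2_\mathbb{C}$ is the set of null complex lines. Let $$G_1=\begin{pmatrix}1&1&-\frac{1+i\sqrt7}{2}\\0&1&-1\\0&0&1\end{pmatrix},\quad G_3=\begin{pmatrix}1&0&0\\-1&1&0\\ \frac{-1+i\sqrt7}{2}&1&1\end{pmatrix},\quad G_2=G_3G_1^{-1}G_3^{-1}G_1,$$ $Q=(1,0,0)^T$, and $\gamma_1=G_2,\gamma_2=G_2^{-1},\gamma_3=G_3,\gamma_4=G_3^{-1}$. The spinal sphere of a matrix $G$ (with $GQ$ not proportional to $Q$) is $\{[Z]\in\partial H^2_\mathbb{C}: |\langle Z,Q\rangle|=|\langle Z,GQ\rangle|\}$, the boundary at infinity of the bisector $|\langle Z,Q\rangle|=|\langle Z,GQ\rangle|$. $G_1^k\mathcal{S}_j$ denotes the image of $\mathcal{S}_j$ under $G_1^k$. *)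

(* Defs.v *)
(* complex numbers are modelled by algC (algebraic complex numbers),
   which contains sqrt 7 and the imaginary unit. *)
From HB Require Import structures.
From mathcomp Require Import all_boot all_order all_algebra all_field.
Set Implicit Arguments. Unset Strict Implicit. Unset Printing Implicit Defensive.
Import Order.TTheory GRing.Theory Num.Theory.
Local Open Scope ring_scope.

Definition mx3 (a b c d e f g h k : algC) : 'M[algC]_3 :=
  \matrix_(i < 3, j < 3)
     nth 0 (nth [::] [:: [:: a; b; c]; [:: d; e; f]; [:: g; h; k]] i) j.

(* Hermitian form <V,W> = V1 conj(W3) + V2 conj(W2) + V3 conj(W1) *)
Definition herm (V W : 'cV[algC]_3) : algC :=
  \sum_(i < 3) V i 0 * (W (rev_ord i) 0)^*.

Definition omega : algC := (1 + 'i * sqrtC 7%:R) / 2%:R.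

Definition G1 : 'M[algC]_3 := mx3 1 1 (- omega)  0 1 (-1)  0 0 1.
Definition G3 : 'M[algC]_3 := mx3 1 0 0  (-1) 1 0  ((-1 + 'i * sqrtC 7%:R) / 2%:R) 1 1.
Definition G2 : 'M[algC]_3 := G3 *m invmx G1 *m invmx G3 *m G1.

Definition Q : 'cV[algC]_3 := \col_(i < 3) (if i == ord0 then 1 else 0).

Definition gamma1 := G2.
Definition gamma2 := invmx G2.
Definition gamma3 := G3.
Definition gamma4 := invmx G3.

(* A point of the boundary of complex hyperbolic 2-space is a null complex line;
   we represent it by any nonzero null vector spanning it (all conditions below
   are invariant under rescaling the representative). *)
Definition null_vec (Z : 'cV[algC]_3) : Prop := Z != 0 /\ herm Z Z = 0.

Definition spinal_sphere (G : 'M[algC]_3) (Z : 'cV[algC]_3) : Prop :=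
  null_vec Z /\ `|herm Z Q| = `|herm Z (G *m Q)|.

Definition G1pow (k : int) : 'M[algC]_3 :=
  match k with
  | Posz n => G1 ^+ n
  | Negz n => invmx G1 ^+ n.+1
  end.

Definition meets (Gi Gj : 'M[algC]_3) (k : int) : Prop :=
  exists Z, spinal_sphere Gi Z /\
    exists W, spinal_sphere Gj W /\ Z = G1pow k *m W.

(* Main.v *)
Require Import Defs.
From HB Require Import structures.
From mathcomp Require Import all_boot all_order all_algebra all_field.
From mathcomp Require Import ring lra zify.
Import Order.TTheory GRing.Theory Num.Theory.
Local Open Scope ring_scope.


Definition col3 (a b c : algC) : 'cV[algC]_3 := \col_(i < 3) nth 0 [:: a; b; c] i.
Definition i0 : 'I_3 := ord0.
Definition i1 : 'I_3 := @Ordinal 3 1 isT.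
Definition i2 : 'I_3 := @Ordinal 3 2 isT.

Lemma col3E (V : 'cV[algC]_3) : V = col3 (V i0 ord0) (V i1 ord0) (V i2 ord0).
Proof.
apply/matrixP=> i j; rewrite !mxE ord1.
by case: i => [[|[|[|?]]] Hi] //=; congr (V _ _); apply: val_inj.
Qed.

Lemma mx3_mul a b c d e f g h k a' b' c' d' e' f' g' h' k' :
  mx3 a b c d e f g h k *m mx3 a' b' c' d' e' f' g' h' k' =
  mx3 (a*a'+b*d'+c*g') (a*b'+b*e'+c*h') (a*c'+b*f'+c*k')
      (d*a'+e*d'+f*g') (d*b'+e*e'+f*h') (d*c'+e*f'+f*k')
      (g*a'+h*d'+k*g') (g*b'+h*e'+k*h') (g*c'+h*f'+k*k').
Proof.
apply/matrixP=> i j; rewrite !mxE !big_ord_recl big_ord0 !mxE.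
by case: i => [[|[|[|?]]] Hi] //=; case: j => [[|[|[|?]]] Hj] //=; ring.
Qed.

Lemma mx3_col a b c d e f g h k x y z :
  mx3 a b c d e f g h k *m col3 x y z =
  col3 (a*x+b*y+c*z) (d*x+e*y+f*z) (g*x+h*y+k*z).
Proof.
apply/matrixP=> i j; rewrite !mxE !big_ord_recl big_ord0 !mxE.
by case: i => [[|[|[|?]]] Hi] //=; ring.
Qed.

Lemma herm3 a b c x y z : herm (col3 a b c) (col3 x y z) = a * z^* + b * y^* + c * x^*.
Proof. by rewrite /herm !big_ord_recl big_ord0 !mxE /=; ring. Qed.

Lemma QE : Q = col3 1 0 0.
Proof. by apply/matrixP=> i j; rewrite !mxE; case: i => [[|[|[|?]]] Hi]. Qed.

Lemma col3_eq a b c x y z : a = x -> b = y -> c = z -> col3 a b c = col3 x y z.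
Proof. by move=> -> -> ->. Qed.

Lemma col3_inj a b c x y z : col3 a b c = col3 x y z -> [/\ a = x, b = y & c = z].
Proof.
move=> H; split.
- by have := congr1 (fun M : 'cV[algC]_3 => M i0 ord0) H; rewrite !mxE.
- by have := congr1 (fun M : 'cV[algC]_3 => M i1 ord0) H; rewrite !mxE.
- by have := congr1 (fun M : 'cV[algC]_3 => M i2 ord0) H; rewrite !mxE.
Qed.


Lemma s7_real : (sqrtC 7%:R : algC)^* = sqrtC 7%:R.
Proof. by apply: conj_Creal; apply: ger0_real; rewrite sqrtC_ge0 ler0n. Qed.

Lemma om_conj : omega^* = 1 - omega.
Proof.
rewrite /omega fmorph_div rmorphD rmorphM /= rmorph1 rmorph_nat conjCi s7_real.
by field.
Qed.

Lemma om_sq : omega ^+ 2 = omega - 2.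
Proof.
have h1 : (sqrtC 7%:R : algC) ^+ 2 = 7%:R by rewrite sqrtCK.
have h2 : ('i : algC) ^+ 2 = -1 by rewrite sqrCi.
rewrite /omega; by field: h1 h2.
Qed.

Lemma G3E : G3 = mx3 1 0 0 (-1) 1 0 (omega - 1) 1 1.
Proof. rewrite /G3 /omega; congr mx3; by field. Qed.

Lemma one3 : (1%:M : 'M[algC]_3) = mx3 1 0 0 0 1 0 0 0 1.
Proof. by apply/matrixP=> i j; rewrite !mxE; case: i => [[|[|[|?]]] Hi] //=; case: j => [[|[|[|?]]] Hj]. Qed.

Definition G1i := mx3 1 (-1) (omega - 1) 0 1 1 0 0 1.
Definition G3i := mx3 1 0 0 1 1 0 (- omega) (-1) 1.

Lemma inv_of (A B : 'M[algC]_3) : A *m B = 1%:M -> A \in unitmx /\ invmx A = B.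
Proof.
move=> AB; have [uA uB] := mulmx1_unit AB; split => //.
by rewrite -[invmx A]mulmx1 -AB mulmxA mulVmx // mul1mx.
Qed.

Lemma G1G1i : G1 *m G1i = 1%:M.
Proof. rewrite /G1 /G1i mx3_mul one3; congr mx3; ring. Qed.
Lemma G1iG1 : G1i *m G1 = 1%:M.
Proof. rewrite /G1 /G1i mx3_mul one3; congr mx3; ring. Qed.
Lemma G3G3i : G3 *m G3i = 1%:M.
Proof. rewrite G3E /G3i mx3_mul one3; congr mx3; ring. Qed.
Lemma G3iG3 : G3i *m G3 = 1%:M.
Proof. rewrite G3E /G3i mx3_mul one3; congr mx3; ring. Qed.


Lemma G1inv : invmx G1 = G1i. Proof. by have [] := inv_of _ _ G1G1i. Qed.
Lemma G3inv : invmx G3 = G3i. Proof. by have [] := inv_of _ _ G3G3i. Qed.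
Lemma G1u : G1 \in unitmx. Proof. by have [] := inv_of _ _ G1G1i. Qed.
Lemma G3u : G3 \in unitmx. Proof. by have [] := inv_of _ _ G3G3i. Qed.
Lemma G1iu : G1i \in unitmx. Proof. by have [] := inv_of _ _ G1iG1. Qed.
Lemma G3iu : G3i \in unitmx. Proof. by have [] := inv_of _ _ G3iG3. Qed.
Lemma G1iinv : invmx G1i = G1. Proof. by have [] := inv_of _ _ G1iG1. Qed.
Lemma G3iinv : invmx G3i = G3. Proof. by have [] := inv_of _ _ G3iG3. Qed.

Lemma gam1Q : gamma1 *m Q = col3 2 (-1 - omega) (-1).
Proof.
have h := om_sq.
rewrite /gamma1 /G2 G1inv G3inv QE -!mulmxA.
rewrite /G1 /G1i /G3i G3E !mx3_col.
apply: col3_eq; ring: h.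
Qed.

Lemma G2inv : invmx G2 = invmx G1 *m G3 *m G1 *m invmx G3.
Proof.
have [] := inv_of G2 (invmx G1 *m G3 *m G1 *m invmx G3) => //.
rewrite /G2 !mulmxA (mulmxK G1u) (mulmxKV G3u) (mulmxKV G1u) mulmxV //; exact: G3u.
Qed.

Lemma gam2Q : gamma2 *m Q = col3 0 0 (-1).
Proof.
have h := om_sq.
rewrite /gamma2 G2inv G1inv G3inv QE -!mulmxA.
rewrite /G1 /G1i /G3i G3E !mx3_col.
apply: col3_eq; ring: h.
Qed.

Lemma gam3Q : gamma3 *m Q = col3 1 (-1) (omega - 1).
Proof. by rewrite /gamma3 G3E QE mx3_col; apply: col3_eq; ring. Qed.

Lemma gam4Q : gamma4 *m Q = col3 1 1 (- omega).
Proof. by rewrite /gamma4 G3inv QE /G3i mx3_col; apply: col3_eq; ring. Qed.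


Lemma G1n n : exists a b, G1 ^+ n = mx3 1 a b 0 1 (- n%:R) 0 0 1.
Proof.
elim: n => [|n [a [b IH]]].
  by exists 0, 0; rewrite expr0 mulr0n oppr0; exact: one3.
exists (a + 1), (- omega - a + b); rewrite exprSr IH -mulmxE /G1 mx3_mul.
congr mx3; rewrite ?natrS; ring.
Qed.

Lemma G1in n : exists a b, G1i ^+ n = mx3 1 a b 0 1 (n%:R) 0 0 1.
Proof.
elim: n => [|n [a [b IH]]].
  by exists 0, 0; rewrite expr0 mulr0n; exact: one3.
exists (a - 1), (omega - 1 + a + b); rewrite exprSr IH -mulmxE /G1i mx3_mul.
congr mx3; rewrite ?natrS; ring.
Qed.

Lemma G1pow_col k x y z : exists a, G1pow k *m col3 x y z = col3 a (y - k%:~R * z) z.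
Proof.
case: k => n /=.
  have [a [b ->]] := G1n n; rewrite mx3_col.
  by eexists; apply: col3_eq; [reflexivity| |]; ring.
rewrite G1inv; have [a [b ->]] := G1in n.+1; rewrite mx3_col NegzE.
by eexists; apply: col3_eq; [reflexivity| |]; rewrite ?mulrNz; ring.
Qed.

Lemma hd_lem (z1 z2 z3 g1 g2 g3 z1' z2' z3' g1' g2' g3' : algC) :
  z3 != 0 -> g3 != 0 -> z3' != 0 -> g3' != 0 ->
  z1 * z3' + z2 * z2' + z3 * z1' = 0 ->
  g1 * g3' + g2 * g2' + g3 * g1' = 0 ->
  (z2 / z3 - g2 / g3) * (z2' / z3' - g2' / g3') =
  - ((z1 * g3' + z2 * g2' + z3 * g1') / (z3 * g3') +
      (z1' * g3 + z2' * g2 + z3' * g1) / (z3' * g3)).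
Proof.
move=> a b c d nZ nG.
apply/eqP; rewrite -subr_eq0; apply/eqP.
have -> : (z2 / z3 - g2 / g3) * (z2' / z3' - g2' / g3') -
  - ((z1 * g3' + z2 * g2' + z3 * g1') / (z3 * g3') +
      (z1' * g3 + z2' * g2 + z3' * g1) / (z3' * g3)) =
   (g3 * g3' * (z1 * z3' + z2 * z2' + z3 * z1') +
    z3 * z3' * (g1 * g3' + g2 * g2' + g3 * g1')) / (z3 * z3' * g3 * g3').
  by field; rewrite a b c d.
by rewrite nZ nG !mulr0 addr0 mul0r.
Qed.


Lemma core (z1 z2 z3 g1 g2 g3 : algC) :
  z3 != 0 -> g3 != 0 ->
  z1 * z3^* + z2 * z2^* + z3 * z1^* = 0 ->
  g1 * g3^* + g2 * g2^* + g3 * g1^* = 0 ->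
  `|z3| = `|z1 * g3^* + z2 * g2^* + z3 * g1^*| ->
  'Re (z2 / z3 - g2 / g3) ^+ 2 <= 2 / `|g3|.
Proof.
move=> nz3 ng3 nZ nG hS.
set d := z2 / z3 - g2 / g3.
set u := (z1 * g3^* + z2 * g2^* + z3 * g1^*) / (z3 * g3^*).
have nz3' : z3^* != 0 by rewrite conjC_eq0.
have ng3' : g3^* != 0 by rewrite conjC_eq0.
have nnz3 : `|z3| != 0 by rewrite normr_eq0.
have nng3 : `|g3| != 0 by rewrite normr_eq0.
have hu : `|u| = `|g3|^-1.
  by rewrite /u normrM normfV normrM -hS norm_conjC invfM mulrA divff // mul1r.
have hd : d * d^* = - (u + u^*).
  rewrite /d /u !(rmorphB, rmorphD, rmorphM, fmorphV) /= !conjCK.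
  by apply: hd_lem.
have h1 : 'Re d ^+ 2 <= `|d| ^+ 2.
  by rewrite normC2_Re_Im lerDl -real_normK ?Creal_Im // exprn_ge0.
have h2 : `|d| ^+ 2 = 2 * 'Re (- u).
  by rewrite normCK hd ReE rmorphN /=; field.
have h3 : 'Re (- u) <= `|u|.
  by rewrite -(normrN u); exact: (leif_Re_Creal (- u)).1.
apply: (le_trans h1); rewrite h2 -hu.
by rewrite ler_wpM2l // ler0n.
Qed.

Lemma z3_nz (z1 z2 z3 g1 g2 g3 : algC) :
  g3 != 0 -> col3 z1 z2 z3 != 0 ->
  z1 * z3^* + z2 * z2^* + z3 * z1^* = 0 ->
  `|z3| = `|z1 * g3^* + z2 * g2^* + z3 * g1^*| -> z3 != 0.
Proof.
move=> ng3 nZ nul hS; apply/negP => /eqP z30.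
move: nul hS; rewrite z30 conjC0 !mulr0 mul0r addr0 add0r => /eqP.
rewrite mul_conjC_eq0 => /eqP z20.
move: nZ; rewrite z20 z30 mul0r addr0 normr0 => nZ /esym /eqP.
rewrite mul0r addr0 normr_eq0 mulf_eq0 conjC_eq0 (negbTE ng3) orbF => /eqP z10.
by move: nZ; rewrite z10; apply/negP; rewrite negbK; apply/eqP/matrixP => i j; rewrite !mxE; case: i => [[|[|[|?]]] Hi].
Qed.


Lemma sphere_info (G : 'M[algC]_3) g1 g2 g3 v1 v2 v3 :
  G *m Q = col3 g1 g2 g3 -> g3 != 0 -> g1 * g3^* + g2 * g2^* + g3 * g1^* = 0 ->
  spinal_sphere G (col3 v1 v2 v3) ->
  v3 != 0 /\ 'Re (v2 / v3 - g2 / g3) ^+ 2 <= 2 / `|g3|.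
Proof.
move=> hG ng nG [[nz nul] hS]; rewrite hG QE !herm3 in hS nul.
rewrite conjC0 conjC1 !mulr0 !add0r mulr1 in hS.
have nv3 := z3_nz v1 v2 v3 g1 g2 g3 ng nz nul hS.
by split => //; exact: (core v1 v2 v3 g1 g2 g3 nv3 ng nul nG hS).
Qed.

Lemma finishR (x y a b r : algR) (k lo hi : int) :
  x ^+ 2 <= a ^+ 2 -> y ^+ 2 <= b ^+ 2 -> 0 <= a -> 0 <= b -> x - y = r - k%:~R ->
  (lo - 1)%:~R < r - a - b -> r + a + b < (hi + 1)%:~R -> (lo <= k <= hi)%R.
Proof.
move=> hx hy ha hb e h1 h2.
have hx1 : x <= a by nra.
have hx2 : - a <= x by nra.
have hy1 : y <= b by nra.
have hy2 : - b <= y by nra.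
have k1 : (lo - 1)%:~R < k%:~R :> algR by lra.
have k2 : k%:~R < (hi + 1)%:~R :> algR by lra.
rewrite ltr_int in k1; rewrite ltr_int in k2.
apply/andP; split; lia.
Qed.

Lemma algR_leE (x y : algR) : (x <= y) = (algRval x <= algRval y).
Proof. by rewrite algR_ler_def ler_def -val_eqE. Qed.

Lemma finishC (X Y : algC) (a b r : algR) (k lo hi : int) :
  X \is Num.real -> Y \is Num.real ->
  X ^+ 2 <= algRval (a ^+ 2) -> Y ^+ 2 <= algRval (b ^+ 2) ->
  X - Y = algRval r - k%:~R -> 0 <= a -> 0 <= b ->
  (lo - 1)%:~R < r - a - b -> r + a + b < (hi + 1)%:~R -> (lo <= k <= hi)%R.
Proof.
move=> HX HY hx hy e ha hb h1 h2.
apply: (@finishR (in_algR HX) (in_algR HY) a b r k lo hi) => //.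
apply: val_inj; rewrite !rmorphB /= rmorph_int; exact: e.
Qed.


Lemma pair_gen (Gi Gj : 'M[algC]_3) gi1 gi2 gi3 gj1 gj2 gj3 (a b r : algR) (lo hi : int) :
  Gi *m Q = col3 gi1 gi2 gi3 -> Gj *m Q = col3 gj1 gj2 gj3 -> gi3 != 0 -> gj3 != 0 ->
  gi1 * gi3^* + gi2 * gi2^* + gi3 * gi1^* = 0 ->
  gj1 * gj3^* + gj2 * gj2^* + gj3 * gj1^* = 0 ->
  2 / `|gi3| <= algRval (a ^+ 2) -> 2 / `|gj3| <= algRval (b ^+ 2) -> 0 <= a -> 0 <= b ->
  (forall k : int, 'Re (gj2 / gj3 - gi2 / gi3 - k%:~R) = algRval r - k%:~R) ->
  (lo - 1)%:~R < r - a - b -> r + a + b < (hi + 1)%:~R ->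
  forall k, meets Gi Gj k -> (lo <= k <= hi)%R.
Proof.
move=> hGi hGj ni nj nuli nulj hai hbj ha hb hr h1 h2 k [Z [SZ [W [SW EZ]]]].
rewrite (col3E W) in SW EZ.
have [a0 Ea] := G1pow_col k (W i0 ord0) (W i1 ord0) (W i2 ord0).
rewrite Ea in EZ; rewrite EZ in SZ.
have [nw3 hY] := sphere_info _ _ _ _ _ _ _ hGj nj nulj SW.
have [_ hX] := sphere_info _ _ _ _ _ _ _ hGi ni nuli SZ.
apply: (finishC _ _ a b r k lo hi (Creal_Re _) (Creal_Re _) (le_trans hX hai) (le_trans hY hbj) _ ha hb h1 h2).
rewrite -raddfB /= -hr; congr ('Re _).
by field; rewrite ?nw3 ?ni ?nj.
Qed.


Definition aR1 : algR := 99%:R / 70%:R.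
Definition aR2 : algR := 25%:R / 21%:R.

Lemma aR1_ge0 : 0 <= aR1. Proof. rewrite /aR1; lra. Qed.
Lemma aR2_ge0 : 0 <= aR2. Proof. rewrite /aR2; lra. Qed.

Lemma two_ne0 : (2 : algC) != 0. Proof. by rewrite pnatr_eq0. Qed.

Lemma om_ne0 : omega != 0.
Proof.
apply/eqP => h; have := om_sq; rewrite h expr0n /= sub0r => /eqP.
by rewrite eq_sym oppr_eq0 (negbTE two_ne0).
Qed.

Lemma om1_ne0 : omega - 1 != 0.
Proof.
apply/eqP => h; have h1 : omega = 1 by apply/eqP; rewrite -subr_eq0 h.
have := om_sq; rewrite h1 expr1n => /eqP; rewrite -subr_eq0.
have -> : (1 - (1 - 2) : algC) = 2 by ring.
by rewrite (negbTE two_ne0).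
Qed.

Lemma rad1 : 2 / `|-1 : algC| <= algRval (aR1 ^+ 2).
Proof.
rewrite normrN normr1 divr1 -(rmorph_nat algRval 2) -algR_leE /aR1; lra.
Qed.

Lemma rad2 (t : algC) : `|t| ^+ 2 = 2 -> 2 / `|t| <= algRval (aR2 ^+ 2).
Proof.
move=> ht; pose n := in_algR (normr_real t).
have hn : n ^+ 2 = 2.
  by apply: val_inj; rewrite rmorphXn /= ht; ring.
have n0 : 0 <= n by rewrite algR_leE /= normr_ge0.
have -> : 2 / `|t| = algRval (2 / n) by rewrite fmorph_div rmorph_nat.
rewrite -algR_leE.
have nn : n != 0 by apply/eqP => h; move: hn; rewrite h expr0n /= => /eqP; rewrite eq_sym pnatr_eq0.
rewrite -{1}hn expr2 mulfK // /aR2.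
nra.
Qed.

Lemma norm_om : `|omega| ^+ 2 = 2.
Proof. by rewrite normCK om_conj; have h := om_sq; ring: h. Qed.

Lemma norm_om1 : `|omega - 1| ^+ 2 = 2.
Proof.
by rewrite normCK rmorphB /= om_conj rmorph1; have h := om_sq; ring: h.
Qed.

Lemma null1 : 2 * (-1)^* + (-1 - omega) * (-1 - omega)^* + (-1) * 2^* = 0 :> algC.
Proof.
rewrite !(rmorphB, rmorphN) /= rmorph1 rmorph_nat om_conj.
by have h := om_sq; ring: h.
Qed.
Lemma null2 : 0 * (-1)^* + 0 * 0^* + (-1) * 0^* = 0 :> algC.
Proof. by rewrite !mul0r conjC0 mulr0 !addr0. Qed.
Lemma null3 : 1 * (omega - 1)^* + (-1) * (-1)^* + (omega - 1) * 1^* = 0 :> algC.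
Proof.
rewrite !(rmorphB, rmorphN) /= rmorph1 om_conj.
by have h := om_sq; ring: h.
Qed.
Lemma null4 : 1 * (- omega)^* + 1 * 1^* + (- omega) * 1^* = 0 :> algC.
Proof.
rewrite !(rmorphB, rmorphN) /= rmorph1 om_conj.
by have h := om_sq; ring: h.
Qed.


Lemma h3L (w : algC) : w != 0 -> 1 - w - 1 != 0.
Proof. by move=> h; rewrite (_ : 1 - w - 1 = -w) ?oppr_eq0 //; ring. Qed.
Lemma h4L (w : algC) : w != 0 -> - w != 0.
Proof. by rewrite oppr_eq0. Qed.
Lemma h6L (w : algC) : w - 1 != 0 -> - (1 - w) != 0.
Proof. by rewrite (_ : - (1 - w) = w - 1) //; ring. Qed.
Lemma h7L (w : algC) : w - 1 != 0 -> 1 - w != 0.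
Proof. by rewrite (_ : 1 - w = - (w - 1)) ?oppr_eq0 //; ring. Qed.
Lemma h5L : (-1 : algC) != 0.
Proof. by rewrite oppr_eq0 oner_eq0. Qed.

Ltac re_tac :=
  let k := fresh "k" in let w := fresh "w" in
  let hc := fresh "hc" in let hs := fresh "hs" in
  let h1 := fresh "h1" in let h2 := fresh "h2" in
  let h3 := fresh "h3" in let h4 := fresh "h4" in
  let h5 := fresh "h5" in let h6 := fresh "h6" in let h7 := fresh "h7" in
  intros k; rewrite ?rmorphN ?fmorph_div ?rmorph_nat ?rmorph0;
  move: om_conj om_sq om_ne0 om1_ne0; generalize omega;
  intros w hc hs h1 h2;
  move: (h3L _ h1) (h4L _ h1) (h6L _ h2) h5L (h7L _ h2); intros h3 h4 h6 h5 h7;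
  rewrite ReE !(rmorphB, rmorphN, rmorphD, rmorphM, fmorphV) /= ?hc ?rmorph1 ?rmorph_int ?conjC0;
  field: hs; rewrite ?h1 ?h2 ?h3 ?h4 ?h5 ?h6 ?h7 //.

Lemma norm4 : `|- omega| ^+ 2 = 2.
Proof. by rewrite normrN norm_om. Qed.

Ltac fin_tac := first [re_tac | rewrite /aR1 /aR2; lra].

Lemma p11 : forall k : int, meets gamma1 gamma1 k -> (-2 <= k <= 2)%R.
Proof.
apply: (pair_gen gamma1 gamma1 _ _ _ _ _ _ aR1 aR1 (0 : algR) _ _ gam1Q gam1Q h5L h5L null1 null1 rad1 rad1 aR1_ge0 aR1_ge0).
all: fin_tac.
Qed.

Lemma p12 : forall k : int, meets gamma1 gamma2 k -> (-4 <= k <= 1)%R.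
Proof.
apply: (pair_gen gamma1 gamma2 _ _ _ _ _ _ aR1 aR1 (- (3%:R / 2%:R) : algR) _ _ gam1Q gam2Q h5L h5L null1 null2 rad1 rad1 aR1_ge0 aR1_ge0).
all: fin_tac.
Qed.

Lemma p13 : forall k : int, meets gamma1 gamma3 k -> (-3 <= k <= 1)%R.
Proof.
apply: (pair_gen gamma1 gamma3 _ _ _ _ _ _ aR1 aR2 (- (5%:R / 4%:R) : algR) _ _ gam1Q gam3Q h5L om1_ne0 null1 null3 rad1 (rad2 _ norm_om1) aR1_ge0 aR2_ge0).
all: fin_tac.
Qed.

Lemma p14 : forall k : int, meets gamma1 gamma4 k -> (-4 <= k <= 0)%R.
Proof.
apply: (pair_gen gamma1 gamma4 _ _ _ _ _ _ aR1 aR2 (- (7%:R / 4%:R) : algR) _ _ gam1Q gam4Q h5L (h4L _ om_ne0) null1 null4 rad1 (rad2 _ norm4) aR1_ge0 aR2_ge0).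
all: fin_tac.
Qed.


Lemma p22 : forall k : int, meets gamma2 gamma2 k -> (-2 <= k <= 2)%R.
Proof.
apply: (pair_gen gamma2 gamma2 _ _ _ _ _ _ aR1 aR1 (0 : algR) _ _ gam2Q gam2Q h5L h5L null2 null2 rad1 rad1 aR1_ge0 aR1_ge0).
all: fin_tac.
Qed.

Lemma p23 : forall k : int, meets gamma2 gamma3 k -> (-2 <= k <= 2)%R.
Proof.
apply: (pair_gen gamma2 gamma3 _ _ _ _ _ _ aR1 aR2 (1%:R / 4%:R : algR) _ _ gam2Q gam3Q h5L om1_ne0 null2 null3 rad1 (rad2 _ norm_om1) aR1_ge0 aR2_ge0).
all: fin_tac.
Qed.

Lemma p24 : forall k : int, meets gamma2 gamma4 k -> (-2 <= k <= 2)%R.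
Proof.
apply: (pair_gen gamma2 gamma4 _ _ _ _ _ _ aR1 aR2 (- (1%:R / 4%:R) : algR) _ _ gam2Q gam4Q h5L (h4L _ om_ne0) null2 null4 rad1 (rad2 _ norm4) aR1_ge0 aR2_ge0).
all: fin_tac.
Qed.

Lemma p33 : forall k : int, meets gamma3 gamma3 k -> (-2 <= k <= 2)%R.
Proof.
apply: (pair_gen gamma3 gamma3 _ _ _ _ _ _ aR2 aR2 (0 : algR) _ _ gam3Q gam3Q om1_ne0 om1_ne0 null3 null3 (rad2 _ norm_om1) (rad2 _ norm_om1) aR2_ge0 aR2_ge0).
all: fin_tac.
Qed.

Lemma p34 : forall k : int, meets gamma3 gamma4 k -> (-2 <= k <= 1)%R.
Proof.
apply: (pair_gen gamma3 gamma4 _ _ _ _ _ _ aR2 aR2 (- (1%:R / 2%:R) : algR) _ _ gam3Q gam4Q om1_ne0 (h4L _ om_ne0) null3 null4 (rad2 _ norm_om1) (rad2 _ norm4) aR2_ge0 aR2_ge0).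
all: fin_tac.
Qed.

Lemma p44 : forall k : int, meets gamma4 gamma4 k -> (-2 <= k <= 2)%R.
Proof.
apply: (pair_gen gamma4 gamma4 _ _ _ _ _ _ aR2 aR2 (0 : algR) _ _ gam4Q gam4Q (h4L _ om_ne0) (h4L _ om_ne0) null4 null4 (rad2 _ norm4) (rad2 _ norm4) aR2_ge0 aR2_ge0).
all: fin_tac.
Qed.



Theorem proposition5p2 :
  (forall k : int, meets gamma1 gamma1 k -> (-2 <= k <= 2)%R) /\
  (forall k : int, meets gamma1 gamma2 k -> (-4 <= k <= 1)%R) /\
  (forall k : int, meets gamma1 gamma3 k -> (-3 <= k <= 1)%R) /\
  (forall k : int, meets gamma1 gamma4 k -> (-4 <= k <= 0)%R) /\
  (forall k : int, meets gamma2 gamma2 k -> (-2 <= k <= 2)%R) /\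
  (forall k : int, meets gamma2 gamma3 k -> (-2 <= k <= 2)%R) /\
  (forall k : int, meets gamma2 gamma4 k -> (-2 <= k <= 2)%R) /\
  (forall k : int, meets gamma3 gamma3 k -> (-2 <= k <= 2)%R) /\
  (forall k : int, meets gamma3 gamma4 k -> (-2 <= k <= 1)%R) /\
  (forall k : int, meets gamma4 gamma4 k -> (-2 <= k <= 2)%R).
Proof.
split; first exact: p11.
split; first exact: p12.
split; first exact: p13.
split; first exact: p14.
split; first exact: p22.
split; first exact: p23.
split; first exact: p24.
split; first exact: p33.
split; first exact: p34.
exact: p44.
Qed.
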